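(* Let $\mathbb{N}$ be a strongly connected directed graph on vertices $\{1,\dots,m\}$, let $\mathcal{J}=\{ij: i\in\{1,\dots,m\},\ j\in\bar{\mathcal{N}}_i\}$ be its set of arcs ($ij$ denoting the arc from $j$ to $i$, $\bar{\mathcal{N}}_i$ the set of $j\neq i$ with such an arc), let $b_i$ be the $i$-th unit vector of $\mathbb{R}^m$, and let $c_{ij}\in\mathbb{R}^{1\times m}$ have entry $-1$ in position $i$, $+1$ in position $j$, and zeros elsewhere. Consider the $|\mathcal{J}|$-channel system $$\dot z=\sum_{ij\in\mathcal{J}}b_iv_{ij},\qquad w_{ij}=c_{ij}z,\quad ij\in\mathcal{J},$$ with state $z\in\mathbb{R}^m$, in which channel $ij$ has input matrix $b_i$ and output matrix $c_{ij}$. Then every complementary subsystem of this system is complete.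
   Context: For a nonempty proper subset $\mathcal{C}\subset\mathcal{J}$ with complement $\bar{\mathcal{C}}=\mathcal{J}\setminus\mathcal{C}$, the complementary subsystem determined by $\mathcal{C}$ is the triple $(\mathbf{C},0_{m\times m},\mathbf{B})$ with $\mathbf{B}$ the block row of the $b_i$, $ij\in\mathcal{C}$, and $\mathbf{C}$ the block column of the $c_{ij}$, $ij\in\bar{\mathcal{C}}$. It is complete if its transfer matrix $\mathbf{C}(sI)^{-1}\mathbf{B}$ is nonzero and the pencil $\begin{bmatrix}\lambda I&\mathbf{B}\\ \mathbf{C}&0\end{bmatrix}$ has rank at least $m$ for every complex $\lambda$. *)

(* Defs.v *)
From HB Require Import structures.
From mathcomp Require Import all_boot all_order all_algebra all_field.
Set Implicit Arguments. Unset Strict Implicit. Unset Printing Implicit Defensive.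
Import Order.TTheory GRing.Theory Num.Theory.
Local Open Scope ring_scope.

(* Vertices are 'I_m (standing for {1,...,m}).  The graph is given by a
   relation [arc : rel 'I_m], where [arc j i] means there is an arc from j to i. *)

Definition strongly_connected (m : nat) (arc : rel 'I_m) : Prop :=
  forall x y : 'I_m, connect arc x y.

(* The arc set J = { ij : j in Nbar_i }, where ij = (i, j) denotes the arc
   from j to i, with j <> i. *)
Definition arcset (m : nat) (arc : rel 'I_m) : {set 'I_m * 'I_m} :=
  [set p : 'I_m * 'I_m | (p.2 != p.1) && arc p.2 p.1].

Definition bvec (m : nat) (i : 'I_m) : 'cV[algC]_m :=
  \col_(r < m) (r == i)%:R.

Definition cvec (m : nat) (i j : 'I_m) : 'rV[algC]_m :=
  \row_(c < m) ((c == j)%:R - (c == i)%:R).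

Definition Bmat (m : nat) (C : {set 'I_m * 'I_m}) : 'M[algC]_(m, #|C|) :=
  \matrix_(r < m, k < #|C|) bvec (enum_val k).1 r 0.

Definition Cmat (m : nat) (D : {set 'I_m * 'I_m}) : 'M[algC]_(#|D|, m) :=
  \matrix_(k < #|D|, c < m) cvec (enum_val k).1 (enum_val k).2 0 c.

(* Transfer matrix C (sI)^{-1} B of the triple (C, 0, B), evaluated at s. *)
Definition transfer (m : nat) (J C : {set 'I_m * 'I_m}) (s : algC)
  : 'M[algC]_(#|J :\: C|, #|C|) :=
  Cmat (J :\: C) *m invmx (s%:M : 'M[algC]_m) *m Bmat C.

Definition pencil (m : nat) (J C : {set 'I_m * 'I_m}) (lam : algC)
  : 'M[algC]_(m + #|J :\: C|, m + #|C|) :=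
  block_mx (lam%:M) (Bmat C) (Cmat (J :\: C)) 0.

(* Completeness of the complementary subsystem determined by C (within J):
   the transfer matrix (a rational matrix function of s) is not identically
   zero, and the pencil has rank >= m for every complex lambda. *)
Definition complete_subsystem (m : nat) (J C : {set 'I_m * 'I_m}) : Prop :=
  (exists s : algC, s != 0 /\ transfer J C s != 0) /\
  (forall lam : algC, (m <= \rank (pencil J C lam))%N).

(* Main.v *)
Require Import Defs.
From HB Require Import structures.
From mathcomp Require Import all_boot all_order all_algebra all_field.
Set Implicit Arguments. Unset Strict Implicit. Unset Printing Implicit Defensive.
Import Order.TTheory GRing.Theory Num.Theory.
Local Open Scope ring_scope.

Lemma closed_connect (T : finType) (e : rel T) (P : pred T) :
  (forall a b, e a b -> P a -> P b) -> forall x y, connect e x y -> P x -> P y.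
Proof.
move=> H x y /connectP [p]; elim: p x => [|z p IH] x /=; first by move=> _ ->.
by move=> /andP[exz pz] yE Px; apply: (IH z pz yE); apply: H Px.
Qed.

Lemma sum_delta (m : nat) (f : 'I_m -> algC) (h : 'I_m) :
  \sum_c f c * (c == h)%:R = f h.
Proof.
rewrite (bigD1 h) //= eqxx mulr1 big1 ?addr0 // => c /negbTE ->.
by rewrite mulr0.
Qed.

Lemma sum_delta' (m : nat) (f : 'I_m -> algC) (h : 'I_m) :
  \sum_c (c == h)%:R * f c = f h.
Proof. by rewrite -(sum_delta f); apply: eq_bigr => c _; rewrite mulrC. Qed.

Theorem lemma2 (m : nat) (arc : rel 'I_m) :
  strongly_connected arc ->
  forall C : {set 'I_m * 'I_m},
    C \subset arcset arc -> C != set0 -> C != arcset arc ->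
    complete_subsystem (arcset arc) C.
Proof.
move=> Hsc C CJ Cn0 CnJ.
set J := arcset arc.
have inJ : forall a b : 'I_m, arc a b -> a != b -> (b, a) \in J.
  by move=> a b ab nab; rewrite inE /= nab ab.
have [q0 q0C] := set0Pn _ Cn0.
have JCn0 : J :\: C != set0.
  apply: contra CnJ; rewrite setD_eq0 => JC; by rewrite eqEsubset CJ JC.
have [p0 p0JC] := set0Pn _ JCn0.
split.
- exists 1; split; first exact: oner_neq0.
  have Hex : [exists p in J :\: C, exists q in C, (q.1 == p.1) || (q.1 == p.2)].
    apply: contraT => /negP Hn.
    have HP : forall y : 'I_m, [exists l, (y, l) \in C].
      move=> y; apply: (@closed_connect _ arc (fun y => [exists l, (y, l) \in C]) _ q0.1 y (Hsc _ _)).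
        move=> a b ab /existsP [l al].
        have [<-|nab] := eqVneq a b; first by apply/existsP; exists l.
        have baJ := inJ _ _ ab nab.
        case baC : ((b, a) \in C); first by apply/existsP; exists a.
        exfalso; apply: Hn; apply/existsP; exists (b, a); rewrite inE baC baJ /=.
        by apply/existsP; exists (a, l); rewrite al /= eqxx orbT.
      by apply/existsP; exists q0.2; rewrite -surjective_pairing.
    have /existsP [l pl] := HP p0.1.
    exfalso; apply: Hn; apply/existsP; exists p0; rewrite p0JC /=.
    by apply/existsP; exists (p0.1, l); rewrite pl /= eqxx.
  have /exists_inP [p pJC /exists_inP [q qC Hq]] := Hex.
  rewrite /transfer invmx1 mulmx1.
  apply/eqP => H0.
  move/matrixP: H0 => /(_ (enum_rank_in pJC p) (enum_rank_in qC q)).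
  rewrite !mxE /= (eq_bigr (fun c => ((c == p.2)%:R - (c == p.1)%:R) * (c == q.1)%:R)).
    rewrite sum_delta.
    have pne : p.2 != p.1 by move: pJC; rewrite !inE => /andP[_ /andP[]].
    case/orP: Hq => /eqP ->; rewrite eqxx.
      by rewrite eq_sym (negbTE pne) sub0r => /eqP; rewrite oppr_eq0 oner_eq0.
    by rewrite (negbTE pne) subr0 => /eqP; rewrite oner_eq0.
  by move=> c _; rewrite !mxE !enum_rankK_in.
- move=> lam.
  set B := Bmat C; set Cm := Cmat (J :\: C).
  have [->|lam0] := eqVneq lam 0.
    rewrite /pencil -/B -/Cm.
    have -> : (0%:M : 'M[algC]_m) = 0 by apply/matrixP => i j; rewrite !mxE mul0rn.
    have -> : \rank (block_mx 0 B Cm 0) = (\rank Cm + \rank B)%N.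
      rewrite block_mxEv -addsmxE addsmxC addsmxE -block_mxEv.
      exact: rank_diag_block_mx.
    rewrite -(mxrank_tr B).
    have Hle : (\rank (col_mx Cm B^T) <= \rank Cm + \rank B^T)%N.
      by rewrite -addsmxE; exact: (mxrank_adds_leqif Cm B^T).1.
    apply: leq_trans Hle.
    rewrite -mxrank_tr tr_col_mx trmxK row_leq_rank -kermx_eq0.
    apply/rowV0P => v /sub_kermxP; rewrite mul_mx_row => H.
    have /eq_row_mx [vC vB] : row_mx (v *m Cm^T) (v *m B) = row_mx 0 0 by rewrite row_mx0.
    have HB : forall q, q \in C -> v 0 q.1 = 0.
      move=> q qC; move/matrixP: vB => /(_ 0 (enum_rank_in qC q)).
      rewrite !mxE (eq_bigr (fun c => v 0 c * (c == q.1)%:R)) ?sum_delta //.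
      by move=> c _; rewrite !mxE enum_rankK_in.
    have HC : forall p, p \in J :\: C -> v 0 p.1 = v 0 p.2.
      move=> p pJC; move/matrixP: vC => /(_ 0 (enum_rank_in pJC p)).
      rewrite !mxE (eq_bigr (fun c => v 0 c * (c == p.2)%:R - v 0 c * (c == p.1)%:R)).
        by rewrite sumrB !sum_delta => /eqP; rewrite subr_eq0 => /eqP ->.
      by move=> c _; rewrite !mxE enum_rankK_in // mulrBr.
    apply/rowP => x; rewrite mxE; apply/eqP; apply: contraT => vx.
    suff: v 0 x != v 0 x by rewrite eqxx.
    apply: (@closed_connect _ arc (fun y => v 0 y != v 0 x) _ q0.1 x (Hsc _ _)); last first.
      by rewrite (HB _ q0C) eq_sym.
    move=> a b ab; apply: contraNN => /eqP vb.
    have [->|nab] := eqVneq a b; first by rewrite vb.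
    have baJ := inJ _ _ ab nab.
    case baC : ((b, a) \in C).
      by move: vx; rewrite -vb (HB (b, a) baC) eqxx.
    have := HC (b, a); rewrite inE baC baJ /= => <- //; by rewrite vb.
  rewrite /pencil block_mxEv.
  apply: (@leq_trans (\rank (row_mx lam%:M B))); last first.
    by apply: mxrankS; rewrite -addsmxE addsmxSl.
  apply: (@leq_trans (\rank (row_mx lam%:M B *m col_mx 1%:M 0))); last exact: mxrankM_maxl.
  rewrite mul_row_col mulmx1 mulmx0 addr0 -scalemx1 mxrank_scale_nz // mxrank1 //.
Qed.
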